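(* Let ${\tt G}$ be a digraph, $R$ a commutative unital ring and $A$ a unital associative $R$-algebra. Then the cochain complex $(C^*_\mu({\tt G};A,A),d^* )$ does not depend, up to isomorphism of cochain complexes, on the choice of the total order on $V({\tt G})$ used to define it.
   Context: A digraph ${\tt G}=(V,E)$ has finite $V$ and $E\subseteq(V\times V)\setminus\{(v,v)\}$. A multipath is a spanning subgraph (all vertices, subset of edges) each of whose components (of the underlying undirected graph) is an isolated vertex or a simple directed path. $P({\tt G})$ is the set of multipaths ordered by inclusion of edge sets; ${\tt H}\prec{\tt H}\cup e$ denotes adding one edge $e$. Given a total order on $V({\tt G})$, order the components $c_0<\dots<c_k$ of a multipath by minimal vertex and let $s,t$ be the indices of the components containing the source and target of $e$. $\mathcal F_{A,A}({\tt H})=A^{\otimes_R(k+1)}$; for ${\tt H}\prec{\tt H}\cup e$ the merged component is placed at position $\min(s,t)$ and the map replaces $a_s,a_t$ by $a_sa_t$ there. Sign $\sigma({\tt H},{\tt H}\cup e)=t+1$ if $t>s$, $=s$ if $s>t$ (mod 2). $C^n_\mu({\tt G};A,A)=\bigoplus_{{\tt H}\in P({\tt G}),\#E({\tt H})=n}\mathcal F_{A,A}({\tt H})$, $d=\sum_{{\tt H}\prec{\tt H}'}(-1)^{\sigma({\tt H},{\tt H}')}\mathcal F_{A,A}({\tt H}\prec{\tt H}')$. *)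

(* Defs.v *)
From HB Require Import structures.
From mathcomp Require Import all_boot all_order all_algebra.
From mathcomp Require Import boolp.
Set Implicit Arguments. Unset Strict Implicit. Unset Printing Implicit Defensive.
Import GRing.Theory.
Local Open Scope ring_scope.

(* A digraph G = (V, E): V a finType, E : {set V * V} with no loops    *)
(* (the loop-freeness is a hypothesis of the theorem).                  *)
(* A spanning subgraph is given by its edge set H : {set V * V}.        *)
Section Graphs.
Variable V : finType.

Definition und (H : {set V * V}) : rel V :=
  [rel x y | ((x, y) \in H) || ((y, x) \in H)].

(* the connected component of v in (the underlying undirected graph of) H
   is  [set x | connect (und H) v x] *)

(* H is a multipath of the digraph with edge set E: H is a subset of E and
   every component of H is an isolated vertex or a simple directed path,
   i.e. its vertices can be listed without repetition as v_0,...,v_m so that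
   the edges of H leaving vertices of the component are exactly
   (v_i, v_{i+1}). *)
Definition multipath (E H : {set V * V}) : Prop :=
  H \subset E /\
  forall v : V, exists s : seq V,
    [/\ uniq s,
        forall x, (x \in s) = connect (und H) v x &
        forall x y, x \in s ->
          ((x, y) \in H) =
          [exists i : 'I_(size s).-1, (nth v s i == x) && (nth v s i.+1 == y)]].

Definition multipathb (E H : {set V * V}) : bool := `[< multipath E H >].

(* number of components (k+1 in the paper) *)
Definition ncomp (H : {set V * V}) : nat :=
  #|[set [set x | connect (und H) v x] | v : V]|.

Definition total_order (le : rel V) : Prop :=
  [/\ reflexive le, antisymmetric le, transitive le & total le].

Definition isroot (le : rel V) (H : {set V * V}) (w : V) : bool :=
  [forall x, connect (und H) w x ==> le w x].

(* index of the component containing v, when the components are ordered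
   c_0 < ... < c_k by their minimal vertex: the number of components whose
   minimal vertex is strictly smaller than that of the component of v. *)
Definition cidx (le : rel V) (H : {set V * V}) (v : V) : nat :=
  #|[set w | [&& isroot le H w, ~~ connect (und H) v w &
                 [forall x, connect (und H) v x ==> le w x]]]|.

End Graphs.

(* A generator is a pair (H, a) with a = [:: a_0; ...; a_k] : seq A,    *)
(* standing for the elementary tensor a_0 (x) ... (x) a_k in the summand *)
(* F_{A,A}(H) = A^{(x)(k+1)}, a_i sitting on the i-th component c_i.     *)
(* A formal sum is a list of (coefficient, generator) pairs, i.e. an     *)
(* element of the free R-module on generators; the tensor product is     *)
(* the quotient of this free module by the R-submodule spanned by the    *)
(* multilinearity relations (relation [equivq] below).                   *)
Section Cochains.
Variables (R : comPzRingType) (A : algType R) (V : finType).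

Definition Gen := ({set V * V} * seq A)%type.
Definition FS := seq (R * Gen).

Definition coef (f : FS) (g : Gen) : R := \sum_(p <- f | p.2 == g) p.1.

Definition scaleFS (c : R) (f : FS) : FS := [seq (c * p.1, p.2) | p <- f].

Definition basic (h : FS) : Prop :=
  (exists (r : R) (H : {set V * V}) (a : seq A) (i : nat) (x y : A),
      (i < size a)%N /\
      h = [:: (r, (H, set_nth 0 a i (x + y)));
              (- r, (H, set_nth 0 a i x));
              (- r, (H, set_nth 0 a i y))])
  \/
  (exists (r c : R) (H : {set V * V}) (a : seq A) (i : nat) (x : A),
      (i < size a)%N /\
      h = [:: (r, (H, set_nth 0 a i (c *: x)));
              (- (r * c), (H, set_nth 0 a i x))]).

(* f and g define the same element of the tensor product: f - g lies in the
   R-span of the basic relations *)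
Definition equivq (f g : FS) : Prop :=
  exists fs : seq FS, (forall h, h \in fs -> basic h) /\
    forall x : Gen, coef f x - coef g x = \sum_(h <- fs) coef h x.

(* f is a formal sum of generators of C^n_mu(G; A, A): multipaths with n
   edges, with one tensor factor per component *)
Definition cdeg (E : {set V * V}) (n : nat) (f : FS) : Prop :=
  forall p, p \in f ->
    [/\ multipath E p.2.1, #|p.2.1| = n & size p.2.2 = ncomp p.2.1].

(* F_{A,A}(H < H u e): replace a_s, a_t by a_s a_t placed at min(s,t)
   (the factor at position max(s,t) is removed) *)
Definition merge (a : seq A) (s t : nat) : seq A :=
  let m := minn s t in let M := maxn s t in
  set_nth 0 (take M a ++ drop M.+1 a) m (nth 0 a s * nth 0 a t).

Definition sigma (s t : nat) : nat := if (s < t)%N then t.+1 else s.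

Definition dgen (le : rel V) (E : {set V * V}) (p : R * Gen) : FS :=
  let: (r, (H, a)) := p in
  [seq (let s := cidx le H e.1 in let t := cidx le H e.2 in
        ((-1) ^+ sigma s t * r, (e |: H, merge a s t)))
  | e <- enum (E :\: H) & multipathb E (e |: H)].

Definition dFS (le : rel V) (E : {set V * V}) (f : FS) : FS :=
  flatten [seq dgen le E p | p <- f].

(* psi = (psi_n)_n is (a family of representative-level lifts of) an
   isomorphism of cochain complexes
   (C^*_mu(G;A,A), d_le1) --> (C^*_mu(G;A,A), d_le2):
   each psi_n is well defined on classes, maps C^n to C^n, is R-linear,
   bijective on classes, and psi commutes with the differentials. *)
Definition complex_iso (E : {set V * V}) (le1 le2 : rel V)
    (psi : nat -> FS -> FS) : Prop :=
  forall n : nat,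
  (forall f, cdeg E n f -> cdeg E n (psi n f)) /\
  (forall f g, cdeg E n f -> cdeg E n g -> equivq f g ->
     equivq (psi n f) (psi n g)) /\
  (forall f g, cdeg E n f -> cdeg E n g ->
     equivq (psi n (f ++ g)) (psi n f ++ psi n g)) /\
  (forall c f, cdeg E n f ->
     equivq (psi n (scaleFS c f)) (scaleFS c (psi n f))) /\
  (forall f g, cdeg E n f -> cdeg E n g -> equivq (psi n f) (psi n g) ->
     equivq f g) /\
  (forall g, cdeg E n g -> exists2 f, cdeg E n f & equivq (psi n f) g) /\
  (forall f, cdeg E n f ->
     equivq (dFS le2 E (psi n f)) (psi n.+1 (dFS le1 E f))).

End Cochains.

(* Main.v *)
Require Import Defs.
From HB Require Import structures.
From mathcomp Require Import all_boot all_order all_algebra.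
From mathcomp Require Import boolp.
From mathcomp Require Import zify.
Set Implicit Arguments. Unset Strict Implicit. Unset Printing Implicit Defensive.

Section Rank.
Variables (V : finType) (le : rel V).
Hypothesis tot : total_order le.

Definition rk (x : V) : nat := #|[set y | le y x]|.

Lemma le_rk x y : le x y = (rk x <= rk y)%N.
Proof.
case: tot => refl anti trans total.
have sub : forall a b, le a b -> [set z | le z a] \subset [set z | le z b].
  by move=> a b hab; apply/subsetP => z; rewrite !inE => h; exact: trans h hab.
case hxy: (le x y); first by rewrite subset_leq_card // sub.
have hyx : le y x by move: (total x y); rewrite hxy.
apply/esym/negbTE; rewrite -ltnNge; apply: proper_card.
rewrite properE sub //=; apply/subsetPn; exists x; by rewrite !inE ?refl ?hxy.
Qed.

Lemma rk_inj : injective rk.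
Proof.
move=> x y hxy; case: tot => _ anti _ _; apply: anti.
by rewrite !le_rk hxy leqnn.
Qed.
End Rank.

Section Comp.
Variables (V : finType) (H : {set V * V}).
Local Notation cn := (connect (und H)).

Lemma und_sym : symmetric (und H).
Proof. by move=> x y; rewrite /und /= orbC. Qed.

Lemma cn_sym x y : cn x y = cn y x.
Proof. exact: (sym_connect_sym und_sym). Qed.

Lemma cn_trans x y z : cn x y -> cn y z -> cn x z.
Proof. exact: connect_trans. Qed.

Variable f : V -> nat.
Hypothesis f_inj : injective f.

Definition croot v := [arg min_(x < v | cn v x) f x].

Lemma crootP v : cn v (croot v) /\ forall x, cn v x -> (f (croot v) <= f x)%N.
Proof. rewrite /croot; case: arg_minnP => //= r hr hmin; split=> //. Qed.

Lemma croot_eq v w : cn v w -> croot v = croot w.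
Proof.
move=> hvw; have [h1 m1] := crootP v; have [h2 m2] := crootP w.
apply: f_inj; apply/eqP; rewrite eqn_leq; apply/andP; split.
  by apply: m1; apply: cn_trans hvw h2.
by apply: m2; apply: cn_trans _ h1; rewrite cn_sym.
Qed.

Lemma croot_idem v : croot (croot v) = croot v.
Proof. by apply/esym/croot_eq; case: (crootP v). Qed.

Definition Rt := [set w | croot w == w].
Definition mm v := f (croot v).
Definition cnt K := #|[set w in Rt | f w < K]|.

Lemma cnt_mono K K' : (K <= K')%N -> (cnt K <= cnt K')%N.
Proof.
move=> h; apply: subset_leq_card; apply/subsetP => w; rewrite !inE => /andP[-> hw] /=.
exact: leq_trans hw h.
Qed.

Lemma cnt_strict v K : (mm v < K)%N -> (cnt (mm v) < cnt K)%N.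
Proof.
move=> h; apply: proper_card; rewrite properE; apply/andP; split.
  apply/subsetP => w; rewrite !inE => /andP[-> hw] /=; exact: ltn_trans hw h.
apply/subsetPn; exists (croot v); rewrite !inE croot_idem eqxx //= ?ltnn //.
Qed.

Lemma cnt_lt v w : (cnt (mm v) < cnt (mm w))%N = (mm v < mm w)%N.
Proof.
apply/idP/idP; last exact: cnt_strict.
apply: contraLR; rewrite -!leqNgt => h; exact: cnt_mono.
Qed.

Lemma mm_eq v w : (mm v == mm w) = cn v w.
Proof.
apply/idP/idP.
  move/eqP/f_inj => e; have [h1 _] := crootP v; have [h2 _] := crootP w.
  by apply: cn_trans h1 _; rewrite e cn_sym.
by move/croot_eq; rewrite /mm => ->.
Qed.

Lemma cnt_eq v w : (cnt (mm v) == cnt (mm w)) = cn v w.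
Proof.
rewrite -mm_eq; apply/idP/idP; last by move/eqP->.
move/eqP=> e; case: (ltngtP (mm v) (mm w)) => // h.
  by rewrite -cnt_lt e ltnn in h.
by rewrite -cnt_lt e ltnn in h.
Qed.

Lemma cnt_bound v : (cnt (mm v) < #|Rt|)%N.
Proof.
apply: proper_card; rewrite properE; apply/andP; split.
  by apply/subsetP => w; rewrite !inE => /andP[].
apply/subsetPn; exists (croot v); rewrite !inE croot_idem eqxx //= ltnn //.
Qed.

Definition compS v := [set x | cn v x].

Lemma ncompE : ncomp H = #|Rt|.
Proof.
rewrite /ncomp.
have -> : [set [set x | cn v x] | v : V] = [set compS w | w in Rt].
  apply/setP => X; apply/imsetP/imsetP => [[v _ ->]|[w _ ->]]; last by exists w.
  exists (croot v); first by rewrite inE croot_idem.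
  apply/setP => x; rewrite !inE; case: (crootP v) => h _.
  apply/idP/idP => [hx|hx]; first by apply: cn_trans hx; rewrite cn_sym.
  exact: cn_trans h hx.
apply: card_in_imset => w w'; rewrite !inE => /eqP hw /eqP hw' e.
have : w' \in compS w by rewrite e inE connect0.
rewrite inE => /croot_eq; by rewrite hw hw'.
Qed.

End Comp.

Section Cidx.
Variables (V : finType) (le : rel V) (H : {set V * V}).
Hypothesis tot : total_order le.
Local Notation cn := (connect (und H)).
Local Notation f := (rk le).
Local Notation finj := (rk_inj tot).

Lemma isrootE w : isroot le H w = (w \in Rt H f).
Proof.
rewrite /isroot inE; have [h1 m1] := crootP H f w.
apply/forallP/eqP => [h|e x].
  apply: finj; apply/eqP; rewrite eqn_leq m1 ?connect0 // -le_rk //.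
  by have := h (croot H f w); rewrite h1.
by apply/implyP => hx; rewrite le_rk // -{1}e; apply: m1.
Qed.

Lemma cidxE v : cidx le H v = cnt H f (mm H f v).
Proof.
rewrite /cidx /cnt; apply: eq_card => w; rewrite !inE isrootE inE.
have [h1 m1] := crootP H f v.
case hw: (croot H f w == w) => //=.
apply/idP/idP.
  case/andP=> hnc /forallP /(_ (croot H f v)); rewrite h1 /= le_rk // => hle.
  rewrite /mm ltn_neqAle hle andbT; apply/negP => /eqP /finj e.
  by move: hnc; rewrite e; case/negP.
move=> hlt; apply/andP; split.
  apply/negP => hc; move: hlt; rewrite /mm (croot_eq finj hc) (eqP hw) ltnn //.
apply/forallP => x; apply/implyP => hx; rewrite le_rk //.
by apply: ltnW; apply: leq_trans hlt _; apply: m1.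
Qed.

Lemma cidx_bound v : (cidx le H v < ncomp H)%N.
Proof. by rewrite cidxE (ncompE H finj); apply: (cnt_bound H finj). Qed.

Lemma cidx_eq v w : (cidx le H v == cidx le H w) = cn v w.
Proof. by rewrite !cidxE (cnt_eq H finj). Qed.

Lemma cidx_ltE v w : (cidx le H v < cidx le H w)%N = (mm H f v < mm H f w)%N.
Proof. by rewrite !cidxE (cnt_lt H finj). Qed.

Lemma cidx_surj j : (j < ncomp H)%N -> exists v, cidx le H v = j.
Proof.
move=> hj.
set s := [seq cidx le H w | w <- enum (Rt H f)].
have us : uniq s.
  rewrite map_inj_in_uniq ?enum_uniq // => w w'; rewrite !mem_enum !inE.
  move=> /eqP hw /eqP hw' /eqP; rewrite cidx_eq => /(croot_eq finj).
  by rewrite hw hw'.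
have sub : {subset s <= iota 0 (ncomp H)}.
  by move=> x /mapP[w _ ->]; rewrite mem_iota add0n cidx_bound.
have hsz : (size (iota 0 (ncomp H)) <= size s)%N.
  by rewrite size_iota size_map -cardE (ncompE H finj).
have [_ eqs] := uniq_min_size us sub hsz.
have : j \in s by rewrite eqs mem_iota.
by case/mapP=> w _ ->; exists w.
Qed.

End Cidx.

Lemma count_lt (V : finType) (S : {set V}) (pos : V -> nat) K :
  {in S &, injective pos} -> (forall x, x \in S -> pos x < #|S|)%N ->
  (forall j, j < #|S| -> exists2 x, x \in S & pos x = j)%N ->
  (K <= #|S|)%N -> #|[set x in S | pos x < K]| = K.
Proof.
move=> inj bnd surj hK.
set T := [set x in S | pos x < K].
have us : uniq [seq pos x | x <- enum T].
  rewrite map_inj_in_uniq ?enum_uniq // => x y; rewrite !mem_enum !inE.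
  by case/andP=> hx _ /andP[hy _]; apply: inj.
have e : [seq pos x | x <- enum T] =i iota 0 K.
  move=> j; rewrite mem_iota add0n; apply/mapP/idP.
    by case=> x; rewrite mem_enum inE => /andP[_ h] ->.
  move=> hj; have [x hx e] := surj j (leq_trans hj hK).
  by exists x; rewrite // mem_enum inE hx e hj.
by have := perm_size (uniq_perm us (iota_uniq 0 K) e); rewrite size_map size_iota -cardE.
Qed.

Lemma sum_ind (V : finType) (S : {set V}) (b : pred V) :
  (\sum_(x in S) (b x : nat))%N = #|[set x in S | b x]|.
Proof.
rewrite (eq_bigr (fun x => if b x then 1 else 0)%N) //.
rewrite -big_mkcondr /= sum1_card; apply: eq_card => x; rewrite !inE //.
Qed.

Section Merge.
Variables (V : finType) (H : {set V * V}) (u w : V).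
Local Notation cn := (connect (und H)).
Local Notation H' := ((u, w) |: H).
Local Notation cn' := (connect (und H')).
Definition J z := cn z u || cn z w.

Lemma cn_congr y z t : cn y z -> cn y t = cn z t.
Proof.
move=> h; apply/idP/idP => h2; last exact: cn_trans h h2.
by apply: cn_trans h2; rewrite cn_sym.
Qed.

Lemma J_congr y z : cn y z -> J y = J z.
Proof. by move=> h; rewrite /J !(cn_congr _ h). Qed.

Lemma undH' x y : und H' x y = [|| und H x y, (x, y) == (u, w) | (y, x) == (u, w)].
Proof.
rewrite /und /= !in_setU1.
by case: ((x, y) \in H); case: ((y, x) \in H); case: ((x, y) == (u, w)); case: ((y, x) == (u, w)).
Qed.

Lemma lift x y : cn x y -> cn' x y.
Proof. by apply: connect_sub => a b hab; apply: connect1; rewrite undH' hab. Qed.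

Lemma cn'uw : cn' u w.
Proof. by apply: connect1; rewrite undH' eqxx orbT. Qed.

Lemma cnH' x y : cn' x y = cn x y || (J x && J y).
Proof.
apply/idP/idP.
  move=> c.
  pose a := [pred z | cn x z || (J x && J z)].
  have cl : closed (und H') a.
    move=> y1 z1; rewrite undH' => /orP[h|/orP[]/eqP[-> ->]].
    - have h1 : cn y1 z1 by apply: connect1.
      rewrite !inE /= (J_congr h1) (cn_sym H x y1) (cn_sym H x z1) (cn_congr _ h1) //.
    - have Ju : J u by rewrite /J connect0.
      have Jw : J w by rewrite /J connect0 orbT.
      rewrite !inE /= Ju Jw /J.
      by case: (cn x u); case: (cn x w).
    - have Ju : J u by rewrite /J connect0.
      have Jw : J w by rewrite /J connect0 orbT.
      rewrite !inE /= Ju Jw /J.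
      by case: (cn x u); case: (cn x w).
  have := closed_connect cl c; rewrite !inE /= connect0 /= => <- //.
case/orP => [h|/andP[jx jy]]; first exact: lift.
have Ju : forall z, J z -> cn' z u.
  move=> z /orP[h|h]; first exact: lift.
  apply: connect_trans (lift h) _.
  by rewrite (sym_connect_sym (@und_sym _ H')) cn'uw.
apply: connect_trans (Ju _ jx) _.
by rewrite (sym_connect_sym (@und_sym _ H')) Ju.
Qed.

Variable f : V -> nat.
Hypothesis finj : injective f.
Hypothesis hnc : ~~ cn u w.

Local Notation ru := (croot H f u).
Local Notation rw := (croot H f w).
Definition rM := if (f ru < f rw)%N then rw else ru.

Lemma inRt K x : (x \in Rt K f) = (mm K f x == f x).
Proof.
rewrite inE /mm; apply/eqP/eqP => [->|e] //; exact: finj.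
Qed.

Lemma mmH' x : mm H' f x = if J x then minn (mm H f u) (mm H f w) else mm H f x.
Proof.
have [h1' m1'] := crootP H' f x.
have [h1 m1] := crootP H f x.
rewrite /mm; case jx: (J x).
  have [hu mu] := crootP H f u; have [hw mw] := crootP H f w.
  apply/eqP; rewrite eqn_leq; apply/andP; split.
    rewrite leq_min; apply/andP; split; apply: m1'; rewrite cnH' jx /=; apply/orP; right.
      by rewrite /J cn_sym hu.
    by rewrite /J [cn rw w]cn_sym hw orbT.
  have jr : J (croot H' f x).
    move: h1'; rewrite cnH' => /orP[h|/andP[_ //]].
    by rewrite -(J_congr h).
  case/orP: jr => h.
    by rewrite geq_min mu // cn_sym.
  by rewrite geq_min mw ?orbT // cn_sym.
apply/eqP; rewrite eqn_leq; apply/andP; split.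
  by apply: m1'; rewrite cnH' h1.
by apply: m1; move: h1'; rewrite cnH' jx andFb orbF.
Qed.

Lemma fru_neq : f ru != f rw.
Proof.
apply/negP => /eqP /finj e.
have [hu _] := crootP H f u; have [hw _] := crootP H f w.
move/negP: hnc; apply; apply: cn_trans hu _; rewrite e cn_sym //.
Qed.

Lemma JrM : J rM.
Proof.
have [hu _] := crootP H f u; have [hw _] := crootP H f w.
rewrite /rM /J; case: ifP => _; first by rewrite orbC cn_sym hw.
by rewrite cn_sym hu.
Qed.

Lemma RtH' : Rt H' f = Rt H f :\ rM.
Proof.
apply/setP => x; rewrite in_setD1 !inRt mmH'.
have [hu mu] := crootP H f u; have [hw mw] := crootP H f w.
have ne := fru_neq.
case jx: (J x); last first.
  by case: (eqVneq x rM) => [e|] //=; move: jx; rewrite e JrM.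
rewrite /mm.
have [cx|cx] : cn x u \/ cn x w by case/orP: jx; [left|right].
  rewrite (croot_eq finj cx).
  case: (eqVneq x ru) => [->|nx].
    rewrite eqxx andbT /rM /minn; case h: (f ru < f rw).
      by rewrite eqxx; apply/esym/negP => /eqP e; rewrite e ltnn in h.
    by rewrite eqxx /=; apply/negbTE; rewrite eq_sym.
  have -> : (f ru == f x) = false by rewrite (inj_eq finj) eq_sym (negbTE nx).
  rewrite andbF.
  apply/negbTE; rewrite /minn; case: ifP => _; first by rewrite (inj_eq finj) eq_sym.
  rewrite (inj_eq finj); apply/eqP => e.
  move/negP: hnc; apply; rewrite cn_sym in cx; apply: cn_trans cx _.
  by rewrite -e cn_sym.
rewrite (croot_eq finj cx).
case: (eqVneq x rw) => [->|nx].
  rewrite eqxx andbT /rM /minn; case h: (f ru < f rw).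
    by rewrite eqxx /=; apply/negbTE.
  by rewrite eqxx; apply/esym/negP => /eqP e; move: ne; rewrite e eqxx.
have -> : (f rw == f x) = false by rewrite (inj_eq finj) eq_sym (negbTE nx).
rewrite andbF.
apply/negbTE; rewrite /minn; case: ifP => _; last by rewrite (inj_eq finj) eq_sym.
rewrite (inj_eq finj); apply/eqP => e.
move/negP: hnc; apply; apply: cn_trans hu _.
by rewrite e.
Qed.

End Merge.

Definition del (M q : nat) : nat := (q - (M < q))%N.
Definition ins (M k : nat) : nat := if (k < M)%N then k else k.+1.

Lemma max_lt a b c : (maxn a b < c)%N = (a < c)%N && (b < c)%N.
Proof. apply/idP/andP; [move=> h; split; lia | case=> h1 h2; lia]. Qed.

Section MergeCidx.
Variables (V : finType) (le : rel V) (H : {set V * V}) (u w : V).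
Hypothesis tot : total_order le.
Local Notation cn := (connect (und H)).
Local Notation H' := ((u, w) |: H).
Hypothesis hnc : ~~ cn u w.
Local Notation f := (rk le).
Local Notation finj := (rk_inj tot).

Lemma rM_in : rM H u w f \in Rt H f.
Proof. by rewrite /rM inE; case: ifP => _; rewrite (croot_idem H finj). Qed.

Lemma frM : f (rM H u w f) = maxn (mm H f u) (mm H f w).
Proof. by rewrite /rM /maxn /mm; case: ifP. Qed.

Lemma cntH' K : cnt H' f K = (cnt H f K - (maxn (mm H f u) (mm H f w) < K))%N.
Proof.
rewrite /cnt (RtH' finj hnc).
rewrite [X in (_ = X - _)%N](cardsD1 (rM H u w f)) inE rM_in frM /=.
rewrite addKn; apply: eq_card => x; rewrite !inE; by case: (x != _).
Qed.

Lemma ncompH' : ncomp H' = (ncomp H).-1.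
Proof.
rewrite (ncompE H' finj) (ncompE H finj) (RtH' finj hnc).
by rewrite [X in _ = X.-1](cardsD1 (rM H u w f)) rM_in.
Qed.

Lemma cidx_neq : cidx le H u != cidx le H w.
Proof. by rewrite (cidx_eq H tot). Qed.

Lemma cnt_min a b : cnt H f (minn a b) = minn (cnt H f a) (cnt H f b).
Proof.
case: (leqP a b) => h.
  have e2 : minn (cnt H f a) (cnt H f b) = cnt H f a by apply/minn_idPl; exact: cnt_mono.
  by rewrite e2.
have e2 : minn (cnt H f a) (cnt H f b) = cnt H f b by apply/minn_idPr; apply: cnt_mono; exact: ltnW.
by rewrite e2.
Qed.

Lemma cidxH' x : cidx le H' x =
  if J H u w x then minn (cidx le H u) (cidx le H w)
  else del (maxn (cidx le H u) (cidx le H w)) (cidx le H x).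
Proof.
rewrite !cidxE // cntH' (mmH' H u w f).
case: (J H u w x).
  have -> : (maxn (mm H f u) (mm H f w) < minn (mm H f u) (mm H f w))%N = false.
    by apply/negbTE; rewrite -leqNgt; lia.
  by rewrite subn0 cnt_min.
rewrite /del; congr (_ - nat_of_bool _)%N.
by rewrite !max_lt !(cnt_lt H finj).
Qed.

End MergeCidx.

Import GRing.Theory.

Definition Pm (V : finType) (la lb : rel V) (H : {set V * V}) (j : nat) : nat :=
  if [pick v | cidx lb H v == j] is Some v then cidx la H v else 0%N.

Definition reord (T : Type) (x0 : T) (V : finType) (la lb : rel V) (H : {set V * V})
  (a : seq T) : seq T :=
  if size a == ncomp H then mkseq (fun j => nth x0 a (Pm la lb H j)) (size a) else a.

Section PmLemmas.
Variables (V : finType) (la lb : rel V) (H : {set V * V}).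
Hypotheses (ta : total_order la) (tb : total_order lb).
Local Notation cn := (connect (und H)).

Lemma Pm_spec j : (j < ncomp H)%N ->
  exists v, cidx lb H v = j /\ Pm la lb H j = cidx la H v.
Proof.
move=> hj; rewrite /Pm; case: pickP => [v /eqP hv|none].
  by exists v.
have [v hv] := cidx_surj tb hj.
by move: (none v); rewrite hv eqxx.
Qed.

Lemma Pm_cidx v : Pm la lb H (cidx lb H v) = cidx la H v.
Proof.
have [v' [e ->]] := Pm_spec (cidx_bound H tb v).
by apply/eqP; rewrite (cidx_eq H ta) -(cidx_eq H tb) e.
Qed.

Lemma Pm_lt j : (j < ncomp H)%N -> (Pm la lb H j < ncomp H)%N.
Proof. by move=> hj; have [v [_ ->]] := Pm_spec hj; apply: cidx_bound. Qed.

End PmLemmas.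

Lemma Pm_inv (V : finType) (la lb : rel V) (H : {set V * V}) :
  total_order la -> total_order lb ->
  forall j, (j < ncomp H)%N -> Pm lb la H (Pm la lb H j) = j.
Proof.
move=> ta tb j hj; have [v [<- ->]] := Pm_spec la tb hj.
by rewrite (Pm_cidx H tb ta).
Qed.

Section Reord.
Variables (T : Type) (x0 : T) (V : finType) (la lb : rel V) (H : {set V * V}).
Hypotheses (ta : total_order la) (tb : total_order lb).

Lemma size_reord a : size (reord x0 la lb H a) = size a.
Proof. by rewrite /reord; case: ifP => // _; rewrite size_mkseq. Qed.

Lemma reord_inv a : reord x0 lb la H (reord x0 la lb H a) = a.
Proof.
rewrite /reord; case e: (size a == ncomp H); last by rewrite e.
rewrite size_mkseq e; move/eqP: e => e; apply: (@eq_from_nth _ x0); rewrite size_mkseq //.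
move=> j hj; rewrite nth_mkseq // nth_mkseq; last by rewrite e; apply: (Pm_lt tb ta); rewrite -e.
by rewrite (Pm_inv tb ta) // -e.
Qed.

Lemma reord_set_nth a i z : (i < size a)%N -> size a = ncomp H ->
  reord x0 la lb H (set_nth x0 a i z) = set_nth x0 (reord x0 la lb H a) (Pm lb la H i) z.
Proof.
move=> hi e.
have sz : size (set_nth x0 a i z) = size a by rewrite size_set_nth; apply/maxn_idPr.
rewrite /reord sz e eqxx.
have hi' : (Pm lb la H i < ncomp H)%N by apply: (Pm_lt tb ta); rewrite -e.
apply: (@eq_from_nth _ x0).
  by rewrite size_set_nth !size_mkseq; symmetry; apply/maxn_idPr.
rewrite size_mkseq => j hj.
rewrite nth_mkseq // !nth_set_nth /= nth_mkseq //.
have -> : (Pm la lb H j == i) = (j == Pm lb la H i).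
  apply/eqP/eqP => [<-|->]; first by rewrite (Pm_inv ta tb).
  by rewrite (Pm_inv tb ta) // -e.
by [].
Qed.

End Reord.

Lemma del_ins M q : q != M -> ins M (del M q) = q.
Proof. rewrite /del /ins; case: (ltnP M q) => h /= hne; case: ltnP => h2; lia. Qed.

Lemma del_neq s t q : s != t -> q != s -> q != t -> (del (maxn s t) q == minn s t) = false.
Proof. move=> h1 h2 h3; rewrite /del; case: ltnP => h /=; apply/eqP; lia. Qed.

Lemma del_lt n s t q : s != t -> q != s -> q != t -> (s < n)%N -> (t < n)%N -> (q < n)%N ->
  (del (maxn s t) q < n.-1)%N.
Proof. move=> h1 h2 h3 h4 h5 h6; rewrite /del; case: ltnP => h /=; lia. Qed.

Section MergeNth.
Variables (R : comPzRingType) (A : algType R).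

Lemma size_dmerge (a : seq A) s t : s != t -> (s < size a)%N -> (t < size a)%N ->
  size (Defs.merge a s t) = (size a).-1.
Proof.
move=> hne hs ht; rewrite /Defs.merge size_set_nth size_cat size_take size_drop.
have hM : (maxn s t < size a)%N by rewrite gtn_max hs ht.
rewrite hM; lia.
Qed.

Lemma nth_dmerge (a : seq A) s t k : s != t -> (s < size a)%N -> (t < size a)%N ->
  (k < (size a).-1)%N ->
  @nth A 0%R (Defs.merge a s t) k = if k == minn s t then (@nth A 0%R a s * @nth A 0%R a t)%R
                          else @nth A 0%R a (ins (maxn s t) k).
Proof.
move=> hne hs ht hk; rewrite /Defs.merge nth_set_nth /=; case: ifP => // _.
have hM : (maxn s t < size a)%N by rewrite gtn_max hs ht.
rewrite nth_cat size_take hM /ins; case: ifP => h.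
  by rewrite nth_take.
rewrite nth_drop; congr nth; lia.
Qed.

End MergeNth.

Import GRing.Theory.

Section RM.
Variables (R : comPzRingType) (A : algType R) (V : finType) (le1 le2 : rel V).
Hypotheses (t1 : total_order le1) (t2 : total_order le2).
Variables (H : {set V * V}) (u w : V).
Local Notation cn := (connect (und H)).
Local Notation H' := ((u, w) |: H).
Hypothesis hnc : ~~ cn u w.

Lemma reord_merge (a : seq A) : size a = ncomp H ->
  reord (T:=A) 0%R le1 le2 H' (Defs.merge a (cidx le1 H u) (cidx le1 H w)) =
  Defs.merge (reord (T:=A) 0%R le1 le2 H a) (cidx le2 H u) (cidx le2 H w).
Proof.
move=> sa.
set s := cidx le1 H u; set t := cidx le1 H w.
set s' := cidx le2 H u; set t' := cidx le2 H w.
have hst : s != t := cidx_neq t1 hnc.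
have hst' : s' != t' := cidx_neq t2 hnc.
have hs : (s < size a)%N by rewrite sa cidx_bound.
have ht : (t < size a)%N by rewrite sa cidx_bound.
have hs' : (s' < size a)%N by rewrite sa cidx_bound.
have ht' : (t' < size a)%N by rewrite sa cidx_bound.
have szb : size (reord (T:=A) 0%R le1 le2 H a) = size a by rewrite size_reord.
have szm : size (Defs.merge a s t) = ncomp H' by rewrite size_dmerge // (ncompH' t1 hnc) sa.
have bE : forall i, (i < size a)%N -> @nth A 0%R (reord (T:=A) 0%R le1 le2 H a) i = @nth A 0%R a (Pm le1 le2 H i).
  by move=> i hi; rewrite /reord sa eqxx nth_mkseq // -sa.
rewrite {1}/reord szm eqxx.
apply: (@eq_from_nth _ 0%R).
  by rewrite size_mkseq size_dmerge ?szb // (ncompH' t1 hnc) sa.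
rewrite size_mkseq => j hj.
rewrite nth_mkseq //.
have [v [ej ePm]] := Pm_spec le1 t2 hj.
rewrite ePm.
have hk : (cidx le1 H' v < (size a).-1)%N by rewrite sa -(ncompH' t1 hnc) cidx_bound.
have hj' : (j < (size (reord (T:=A) 0%R le1 le2 H a)).-1)%N by rewrite szb sa -(ncompH' t1 hnc).
rewrite nth_dmerge // nth_dmerge ?szb //; last by rewrite -szb.
move: ej; rewrite !(cidxH' _ hnc) //.
case jv: (J H u w v) => ej.
  by rewrite -ej !eqxx bE // bE // -/s' -/t' !Pm_cidx.
have nvs : cidx le1 H v != s by rewrite (cidx_eq H t1); apply/negP => h; move: jv; rewrite /J h.
have nvt : cidx le1 H v != t by rewrite (cidx_eq H t1); apply/negP => h; move: jv; rewrite /J h orbT.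
have nvs' : cidx le2 H v != s' by rewrite (cidx_eq H t2); apply/negP => h; move: jv; rewrite /J h.
have nvt' : cidx le2 H v != t' by rewrite (cidx_eq H t2); apply/negP => h; move: jv; rewrite /J h orbT.
have nM : cidx le1 H v != maxn s t by rewrite /maxn; case: ifP.
have nM' : cidx le2 H v != maxn s' t' by rewrite /maxn; case: ifP.
rewrite -/s -/t -/s' -/t' -ej !del_neq // !del_ins //.
by rewrite bE ?Pm_cidx // sa cidx_bound.
Qed.

End RM.

Lemma odd_sum_eq (V : finType) (S : {set V}) (g h : V -> nat) :
  (forall x, x \in S -> odd (g x) = odd (h x)) ->
  odd (\sum_(x in S) g x) = odd (\sum_(x in S) h x).
Proof.
move=> hx; apply: (big_ind2 (fun a b => odd a = odd b)) => //.
by move=> a1 b1 a2 b2 e1 e2; rewrite !oddD e1 e2.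
Qed.

Lemma ds2 (V : finType) (S : {set V}) (a : V) (F : V -> V -> nat) :
  a \in S -> F a a = 0%N ->
  (\sum_(x in S) \sum_(y in S) F x y =
   \sum_(x in S :\ a) (F a x + F x a) + \sum_(x in S :\ a) \sum_(y in S :\ a) F x y)%N.
Proof.
move=> ha haa.
rewrite (big_setD1 a ha) /= [X in (X + _)%N](big_setD1 a ha) /= haa add0n.
rewrite [X in (_ + X = _)%N](eq_bigr (fun x => F x a + \sum_(y in S :\ a) F x y)%N); last first.
  by move=> x _; rewrite (big_setD1 a ha).
rewrite big_split /= big_split /=; lia.
Qed.

Lemma del_lt_del M p q : p != M -> q != M -> (del M p < del M q)%N = (p < q)%N.
Proof.
move=> h1 h2; rewrite /del; case: (ltnP M p) => hp /=; case: (ltnP M q) => hq /=; lia.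
Qed.

Lemma perx px qx sa ta sb tb : sa != ta -> sb != tb -> px != sa -> px != ta ->
  qx != sb -> qx != tb ->
  odd ( ((sa < px) && (qx < sb)) + ((ta < px) && (qx < tb)) + ((px < sa) && (sb < qx))
   + ((px < ta) && (tb < qx))
   + ((minn sa ta < del (maxn sa ta) px) && (del (maxn sb tb) qx < minn sb tb))
   + ((del (maxn sa ta) px < minn sa ta) && (minn sb tb < del (maxn sb tb) qx)))%N
 = odd ((px < maxn sa ta) + (qx < maxn sb tb))%N.
Proof.
move=> h1 h2 h3 h4 h5 h6.
have e1 : (sa < px) = ~~ (px < sa) by lia.
have e2 : (ta < px) = ~~ (px < ta) by lia.
have e3 : (sb < qx) = ~~ (qx < sb) by lia.
have e4 : (tb < qx) = ~~ (qx < tb) by lia.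
have e5 : (minn sa ta < del (maxn sa ta) px) = ~~ ((px < sa) && (px < ta)).
  by rewrite /del; case: (ltnP (maxn sa ta) px) => h /=; lia.
have e6 : (del (maxn sa ta) px < minn sa ta) = ((px < sa) && (px < ta)).
  by rewrite /del; case: (ltnP (maxn sa ta) px) => h /=; lia.
have e7 : (minn sb tb < del (maxn sb tb) qx) = ~~ ((qx < sb) && (qx < tb)).
  by rewrite /del; case: (ltnP (maxn sb tb) qx) => h /=; lia.
have e8 : (del (maxn sb tb) qx < minn sb tb) = ((qx < sb) && (qx < tb)).
  by rewrite /del; case: (ltnP (maxn sb tb) qx) => h /=; lia.
have e9 : (px < maxn sa ta) = (px < sa) || (px < ta) by lia.
have e10 : (qx < maxn sb tb) = (qx < sb) || (qx < tb) by lia.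
rewrite e1 e2 e3 e4 e5 e6 e7 e8 e9 e10.
by case: (px < sa); case: (px < ta); case: (qx < sb); case: (qx < tb).
Qed.

Lemma odd_eq2 m n k : m = (n + 2 * k)%N -> odd m = odd n.
Proof. by move=> ->; rewrite oddD oddM /= addbF. Qed.

Lemma final_par sa ta sb tb : sa != ta -> sb != tb ->
  odd (((sa < ta) && (tb < sb)) + ((ta < sa) && (sb < tb)) + (maxn sa ta - 1) + (maxn sb tb - 1))%N
  = odd (sigma sa ta + sigma sb tb).
Proof.
move=> h1 h2; rewrite /sigma.
case: (ltngtP sa ta) h1 => // hab _; case: (ltngtP sb tb) h2 => // hcd _.
- apply/esym; apply: (odd_eq2 (k := 2)); rewrite /=; lia.
- apply/esym; apply: (odd_eq2 (k := 1)); rewrite /=; lia.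
- apply/esym; apply: (odd_eq2 (k := 1)); rewrite /=; lia.
- apply/esym; apply: (odd_eq2 (k := 1)); rewrite /=; lia.
Qed.

Definition Phi (V : finType) (la lb : rel V) (H : {set V * V}) : nat :=
  \sum_(x in Rt H (rk la)) \sum_(y in Rt H (rk la))
     ((cidx la H x < cidx la H y) && (cidx lb H y < cidx lb H x) : nat).

Section Parity.
Variables (V : finType) (la lb : rel V).
Hypotheses (ta : total_order la) (tb : total_order lb).
Variables (H : {set V * V}) (u w : V).
Local Notation cn := (connect (und H)).
Local Notation H' := ((u, w) |: H).
Hypothesis hnc : ~~ cn u w.
Local Notation fa := (rk la).
Local Notation S := (Rt H fa).
Local Notation ru := (croot H fa u).
Local Notation rw := (croot H fa w).
Local Notation finj := (rk_inj ta).

Lemma ru_in : ru \in S. Proof. by rewrite inE (croot_idem H finj). Qed.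
Lemma rw_in : rw \in S. Proof. by rewrite inE (croot_idem H finj). Qed.
Lemma cn_ru : cn ru u. Proof. by rewrite cn_sym; case: (crootP H fa u). Qed.
Lemma cn_rw : cn rw w. Proof. by rewrite cn_sym; case: (crootP H fa w). Qed.
Lemma ru_rw : ru != rw.
Proof.
apply/negP => /eqP e; move/negP: hnc; apply.
apply: cn_trans _ cn_rw; rewrite -e cn_sym; exact: cn_ru.
Qed.

Lemma pos_ru (lc : rel V) : total_order lc -> cidx lc H ru = cidx lc H u.
Proof. by move=> tc; apply/eqP; rewrite (cidx_eq H tc) cn_ru. Qed.
Lemma pos_rw (lc : rel V) : total_order lc -> cidx lc H rw = cidx lc H w.
Proof. by move=> tc; apply/eqP; rewrite (cidx_eq H tc) cn_rw. Qed.

Lemma O_notJ x : x \in S :\ rw :\ ru -> ~~ J H u w x.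
Proof.
rewrite !inE => /and3P[n1 n2 /eqP hx]; apply/negP => /orP[h|h].
  by move: n1; rewrite -hx (croot_eq finj h) eqxx.
by move: n2; rewrite -hx (croot_eq finj h) eqxx.
Qed.

Lemma notJ_neq (lc : rel V) x : total_order lc -> ~~ J H u w x ->
  (cidx lc H x != cidx lc H u) && (cidx lc H x != cidx lc H w).
Proof.
move=> tc; rewrite /J negb_or => /andP[h1 h2].
by rewrite !(cidx_eq H tc) h1 h2.
Qed.

Definition rm := if (fa ru < fa rw)%N then ru else rw.

Lemma J_rm : J H u w rm.
Proof. by rewrite /rm /J; case: ifP => _; rewrite ?cn_ru ?cn_rw ?orbT. Qed.

Lemma rm_in : rm \in S :\ rM H u w fa.
Proof.
have ne := ru_rw.
rewrite /rm /rM; case: ifP => _; rewrite in_setD1 ?ru_in ?rw_in ?andbT //.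
by rewrite eq_sym.
Qed.

Lemma S'rm : S :\ rM H u w fa :\ rm = S :\ rw :\ ru.
Proof.
apply/setP => x; rewrite !inE /rm /rM; case: ifP => _;
  by case: (x == ru); case: (x == rw).
Qed.

Lemma count_O (lc : rel V) (tc : total_order lc) :
  (\sum_(x in S :\ rw :\ ru)
     (cidx lc H x < maxn (cidx lc H u) (cidx lc H w) : nat))%N =
  (maxn (cidx lc H u) (cidx lc H w)).-1.
Proof.
set K := maxn _ _.
have hn : (K <= #|S|)%N.
  rewrite -(ncompE H finj) /K geq_max; apply/andP; split; apply: ltnW; exact: cidx_bound.
have inj : {in S &, injective (cidx lc H)}.
  move=> x y; rewrite !inE => /eqP hx /eqP hy /eqP.
  rewrite (cidx_eq H tc) => /(croot_eq finj); by rewrite hx hy.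
have bnd : forall x, x \in S -> (cidx lc H x < #|S|)%N.
  by move=> x _; rewrite -(ncompE H finj) cidx_bound.
have surj : forall j, (j < #|S|)%N -> exists2 x, x \in S & cidx lc H x = j.
  move=> j; rewrite -(ncompE H finj) => hj.
  have [v hv] := cidx_surj tc hj.
  exists (croot H fa v); first by rewrite inE (croot_idem H finj).
  rewrite -hv; apply/eqP; rewrite (cidx_eq H tc) cn_sym; by case: (crootP H fa v).
have := count_lt inj bnd surj hn.
rewrite -sum_ind (big_setD1 ru ru_in) (big_setD1 rw) /=; last by rewrite in_setD1 eq_sym ru_rw rw_in.
rewrite !pos_ru // !pos_rw //.
have hst : cidx lc H u != cidx lc H w by rewrite (cidx_eq H tc).
have e1 : ((cidx lc H u < K) + (cidx lc H w < K) = 1)%N.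
  by rewrite /K /maxn; case: (ltngtP (cidx lc H u) (cidx lc H w)) hst => // h _; rewrite ltnn h.
have -> : (S :\ ru :\ rw) = (S :\ rw :\ ru) by apply/setP => x; rewrite !inE andbCA.
lia.
Qed.

Local Notation F K x y :=
  ((cidx la K x < cidx la K y) && (cidx lb K y < cidx lb K x) : nat).

Lemma parity :
  odd (Phi la lb H' + Phi la lb H) =
  odd (sigma (cidx la H u) (cidx la H w) + sigma (cidx lb H u) (cidx lb H w)).
Proof.
have sw : S :\ ru :\ rw = S :\ rw :\ ru by apply/setP => x; rewrite !inE andbCA.
have rwin : rw \in S :\ ru by rewrite in_setD1 eq_sym ru_rw rw_in.
have EH : Phi la lb H =
  (F H ru rw + F H rw ru + \sum_(x in S :\ rw :\ ru) (F H ru x + F H x ru)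
   + \sum_(x in S :\ rw :\ ru) (F H rw x + F H x rw)
   + \sum_(x in S :\ rw :\ ru) \sum_(y in S :\ rw :\ ru) F H x y)%N.
  rewrite /Phi (ds2 ru_in); last by rewrite ltnn.
  rewrite (ds2 rwin); last by rewrite ltnn.
  rewrite (big_setD1 rw rwin) /= sw; lia.
set T := (\sum_(x in S :\ rw :\ ru) \sum_(y in S :\ rw :\ ru) F H x y)%N.
have EH' : Phi la lb H' =
  (\sum_(x in S :\ rw :\ ru) (F H' rm x + F H' x rm) + T)%N.
  rewrite /Phi (RtH' finj hnc) (ds2 rm_in); last by rewrite ltnn.
  rewrite S'rm; congr (_ + _)%N.
  apply: eq_bigr => x hx; apply: eq_bigr => y hy.
  have [nxa nxb] := (notJ_neq ta (O_notJ hx), notJ_neq tb (O_notJ hx)).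
  have [nya nyb] := (notJ_neq ta (O_notJ hy), notJ_neq tb (O_notJ hy)).
  rewrite !(cidxH' _ hnc) // (negbTE (O_notJ hx)) (negbTE (O_notJ hy)).
  have mx : forall (p s t : nat), (p != s) && (p != t) -> p != maxn s t.
    by move=> p s0 t0 /andP[h1 h2]; rewrite /maxn; case: ifP.
  by rewrite !del_lt_del // mx.
rewrite EH EH'.
have rearr : forall B T D A1 A2, (B + T + (D + A1 + A2 + T) = (D + (A1 + A2 + B)) + 2 * T)%N.
  by move=> *; lia.
rewrite rearr oddD oddM andFb addbF -!big_split /=.
rewrite oddD (odd_sum_eq (h := fun x =>
   ((cidx la H x < maxn (cidx la H u) (cidx la H w)) +
    (cidx lb H x < maxn (cidx lb H u) (cidx lb H w)))%N)); last first.
  move=> x hx.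
  have /andP[nxa1 nxa2] := notJ_neq ta (O_notJ hx).
  have /andP[nxb1 nxb2] := notJ_neq tb (O_notJ hx).
  have hsa : cidx la H u != cidx la H w by rewrite (cidx_eq H ta).
  have hsb : cidx lb H u != cidx lb H w by rewrite (cidx_eq H tb).
  rewrite !(cidxH' _ hnc) // (negbTE (O_notJ hx)) J_rm !pos_ru // !pos_rw //.
  rewrite -(perx hsa hsb nxa1 nxa2 nxb1 nxb2); congr odd; lia.
rewrite big_split /= !count_O // !pos_ru // !pos_rw //.
have hsa : cidx la H u != cidx la H w by rewrite (cidx_eq H ta).
have hsb : cidx lb H u != cidx lb H w by rewrite (cidx_eq H tb).
rewrite -(final_par hsa hsb) !oddD.
have h1 : forall s t, s != t -> (maxn s t).-1 = (maxn s t - 1)%N by move=> *; lia.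
by rewrite !subn1 !addbA.
Qed.

End Parity.

Lemma ec (V : finType) (H : {set V * V}) (s : seq V) (v : V) : uniq s ->
  (forall x y, x \in s -> ((x, y) \in H) =
     [exists i : 'I_(size s).-1, (nth v s i == x) && (nth v s i.+1 == y)]) ->
  #|[set p in H | p.1 \in s]| = (size s).-1.
Proof.
move=> us hs.
have lt1 : forall i : 'I_(size s).-1, (i < size s)%N.
  by move=> i; have := ltn_ord i; lia.
have lt2 : forall i : 'I_(size s).-1, (i.+1 < size s)%N.
  by move=> i; have := ltn_ord i; lia.
have -> : [set p in H | p.1 \in s] =
          [set (nth v s i, nth v s i.+1) | i : 'I_(size s).-1].
  apply/setP => [[x y]]; rewrite !inE /=.
  apply/andP/imsetP => [[hxy hx]|[i _ [-> ->]]].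
    move: hxy; rewrite hs // => /existsP[i /andP[/eqP <- /eqP <-]].
    by exists i.
  have hx : nth v s i \in s by rewrite mem_nth.
  split=> //; rewrite hs //; apply/existsP; exists i; by rewrite !eqxx.
rewrite card_imset ?card_ord // => i j [e _].
apply: val_inj => /=; apply/eqP.
by rewrite -(nth_uniq v (lt1 i) (lt1 j) us) e.
Qed.

Lemma notconn (V : finType) (E H : {set V * V}) (u w : V) :
  multipath E H -> multipath E ((u, w) |: H) -> (u, w) \notin H ->
  ~~ connect (und H) u w.
Proof.
move=> [_ mH] [_ mH'] nin; apply/negP => c.
have [s [us ms es]] := mH u.
have [s' [us' ms' es']] := mH' u.
have ss : s =i s'.
  move=> x; rewrite ms ms' cnH'.
  have Ju : J H u w u by rewrite /J connect0.
  rewrite Ju /=; case jx: (J H u w x); last by rewrite orbF.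
  rewrite orbT; case/orP: jx => h; first by rewrite cn_sym.
  by apply: cn_trans c _; rewrite cn_sym.
have sz : size s = size s' by apply: perm_size; apply: uniq_perm.
have c1 := ec us es.
have c2 := ec us' es'.
have e : [set p in (u, w) |: H | p.1 \in s'] = (u, w) |: [set p in H | p.1 \in s].
  apply/setP => [[x y]]; rewrite !inE /= -ss.
  case: (eqVneq (x, y) (u, w)) => [[-> ->]|] /=; last by [].
  by rewrite ms connect0.
move: c2; rewrite e cardsU1 c1 inE (negbTE nin) /= sz.
have : (0 < size s')%N.
  by case: s' ss {us' es' sz e ms'} => // ss; have := ss u; rewrite ms connect0.
lia.
Qed.

Import GRing.Theory.
Local Open Scope ring_scope.

Definition le0 (V : finType) : rel V := fun x y => (enum_rank x <= enum_rank y)%N.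

Lemma tot0 (V : finType) : total_order (@le0 V).
Proof.
split.
- by move=> x; rewrite /le0 leqnn.
- by move=> x y /andP[h1 h2]; apply: enum_rank_inj; apply: val_inj; apply/eqP; rewrite /= eqn_leq; exact/andP.
- by move=> x y z h1 h2; exact: leq_trans h1 h2.
- by move=> x y; exact: leq_total.
Qed.

Section Main.
Variables (R : comPzRingType) (A : algType R) (V : finType).

Definition sgn (la lb : rel V) (H : {set V * V}) : R :=
  (-1) ^+ (Phi la (@le0 V) H + Phi lb (@le0 V) H)%N.

Definition phi (la lb : rel V) (g : Gen A V) : Gen A V :=
  (g.1, reord (T:=A) 0 la lb g.1 g.2).

Definition psig (la lb : rel V) (p : R * Gen A V) : R * Gen A V :=
  (sgn la lb p.2.1 * p.1, phi la lb p.2).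

Lemma phiK (la lb : rel V) : total_order la -> total_order lb ->
  forall g, phi lb la (phi la lb g) = g.
Proof. by move=> ta tb [H a]; rewrite /phi /= reord_inv. Qed.

Variables (la lb : rel V).
Hypotheses (ta : total_order la) (tb : total_order lb).

Lemma sgnK H : sgn lb la H * sgn la lb H = 1.
Proof.
by rewrite /sgn -exprD -signr_odd (addnC (Phi lb _ _)) oddD addbb.
Qed.

Lemma psigK p : psig lb la (psig la lb p) = p.
Proof.
case: p => r [H a]; rewrite /psig /= (phiK ta tb) mulrA sgnK mul1r //.
Qed.

Lemma mapK f : map (psig lb la) (map (psig la lb) f) = f.
Proof. by rewrite -map_comp map_id_in // => p _; rewrite /= psigK. Qed.

Lemma coef_psig f x :
  coef (map (psig la lb) f) x = sgn la lb x.1 * coef f (phi lb la x).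
Proof.
rewrite /coef big_map mulr_sumr.
apply: eq_big => [q|q /eqP e].
  rewrite /psig /=; apply/eqP/eqP => [<-|->]; first by rewrite (phiK ta tb).
  by rewrite (phiK tb ta).
by move: e; rewrite /psig /= => <-.
Qed.

Lemma equivq_refl (f : FS A V) : equivq f f.
Proof. by exists [::]; split => // x; rewrite subrr big_nil. Qed.

Lemma basic_psig h : basic h -> basic (map (psig la lb) h).
Proof.
case => [[r [H [a [i [x [y [hi ->]]]]]]] | [r [c0 [H [a [i [x [hi ->]]]]]]]].
- left; rewrite /= /psig /phi /=.
  have sz : forall z : A, size (set_nth 0 a i z) = size a.
    by move=> z; rewrite size_set_nth; apply/maxn_idPr.
  case e: (size a == ncomp H).
    exists (sgn la lb H * r), H, (reord 0 la lb H a), (Pm lb la H i), x, y.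
    split; first by rewrite size_reord (eqP e) (Pm_lt tb ta) // -(eqP e).
    by move/eqP: e => e; rewrite !mulrN !(reord_set_nth 0 ta tb).
  exists (sgn la lb H * r), H, a, i, x, y; split => //.
  by rewrite /reord !sz e !mulrN.
- right; rewrite /= /psig /phi /=.
  have sz : forall z : A, size (set_nth 0 a i z) = size a.
    by move=> z; rewrite size_set_nth; apply/maxn_idPr.
  case e: (size a == ncomp H).
    exists (sgn la lb H * r), c0, H, (reord 0 la lb H a), (Pm lb la H i), x.
    split; first by rewrite size_reord (eqP e) (Pm_lt tb ta) // -(eqP e).
    by move/eqP: e => e; rewrite mulrN mulrA !(reord_set_nth 0 ta tb).
  exists (sgn la lb H * r), c0, H, a, i, x; split => //.
  by rewrite /reord !sz e mulrN mulrA.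
Qed.

Lemma wd f g : equivq f g -> equivq (map (psig la lb) f) (map (psig la lb) g).
Proof.
case=> fs [hb he]; exists (map (map (psig la lb)) fs); split.
  by move=> h /mapP[h0 h0in ->]; apply: basic_psig; apply: hb.
move=> x; rewrite !coef_psig -mulrBr he big_map mulr_sumr.
by apply: eq_bigr => h _; rewrite coef_psig.
Qed.

End Main.

Section Chain.
Variables (R : comPzRingType) (A : algType R) (V : finType) (la lb : rel V).
Hypotheses (ta : total_order la) (tb : total_order lb).
Variable E : {set V * V}.

Lemma chain_gen (p : R * Gen A V) : multipath E p.2.1 -> size p.2.2 = ncomp p.2.1 ->
  dgen lb E (psig la lb p) = map (psig la lb) (dgen la E p).
Proof.
case: p => r [H a] /= mpH sa.
rewrite /dgen /psig /phi /= -map_comp.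
apply/eq_in_map => e; rewrite mem_filter => /andP[/asboolP mp' ein].
case: e mp' ein => u w mp' ein /=.
have nin : (u, w) \notin H by move: ein; rewrite mem_enum !inE => /andP[].
have hnc := notconn mpH mp' nin.
rewrite (reord_merge ta tb hnc sa); congr pair.
have key : odd (sigma (cidx lb H u) (cidx lb H w) +
                (Phi la (@le0 V) H + Phi lb (@le0 V) H)) =
           odd (Phi la (@le0 V) ((u, w) |: H) + Phi lb (@le0 V) ((u, w) |: H) +
                sigma (cidx la H u) (cidx la H w)).
  have p1 := parity ta (tot0 V) hnc.
  have p2 := parity tb (tot0 V) hnc.
  move: p1 p2; rewrite !oddD.
  move: (odd (Phi la _ H)) (odd (Phi lb _ H)) (odd (Phi la _ ((u, w) |: H)))
        (odd (Phi lb _ ((u, w) |: H))) (odd (sigma (cidx la H u) _))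
        (odd (sigma (cidx lb H u) _)) (odd (sigma (cidx (@le0 V) H u) _)).
  by do 7 case.
rewrite /sgn !mulrA -!exprD.
by rewrite -signr_odd key signr_odd.
Qed.

End Chain.

Unset Implicit Arguments. Set Strict Implicit. Set Printing Implicit Defensive.

Theorem proposition4p11 (R : comPzRingType) (A : algType R) (V : finType)
    (E : {set V * V}) (loopless : forall v : V, (v, v) \notin E)
    (le1 le2 : rel V) (tot1 : total_order le1) (tot2 : total_order le2) :
  exists psi : nat -> FS A V -> FS A V, complex_iso E le1 le2 psi.
Proof.
exists (fun _ => map (psig le1 le2)) => n.
have cd : forall la lb, forall f, cdeg E n f -> cdeg E n (map (psig (A:=A) la lb) f).
  move=> la lb f hf p /mapP[q qin ->]; have [m1 m2 m3] := hf q qin.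
  by split; rewrite /psig /phi /= ?size_reord.
refine (conj _ (conj _ (conj _ (conj _ (conj _ (conj _ _)))))).
- exact: cd.
- by move=> f g _ _; apply: wd.
- by move=> f g _ _; rewrite map_cat; apply: equivq_refl.
- move=> c f _.
  have -> : map (psig le1 le2) (scaleFS c f) = scaleFS c (map (psig le1 le2) f).
    by rewrite /scaleFS -!map_comp; apply: eq_map => q; rewrite /psig /= mulrCA.
  exact: equivq_refl.
- move=> f g _ _ h; have := wd tot2 tot1 h.
  by rewrite !(mapK tot1 tot2).
- move=> g hg; exists (map (psig le2 le1) g); first exact: cd.
  by rewrite (mapK tot2 tot1); apply: equivq_refl.
- move=> f hf; rewrite /dFS map_flatten -!map_comp.
  have -> : map (dgen le2 E \o psig le1 le2) f = map (map (psig le1 le2) \o dgen le1 E) f.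
    apply/eq_in_map => q qin /=; have [m1 _ m3] := hf q qin.
    exact: chain_gen.
  exact: equivq_refl.
Qed.
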